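(* Let $f(x)=\frac12x^\top Ax-b^\top x$ on $\mathbb{R}^n$, where $A$ is symmetric positive definite with $\mu I\preceq A\preceq LI$, $0<\mu\le L$, and $b\in\mathbb{R}^n$. Consider the SR1 iteration: choose $x_0$, set $G_0=L\cdot I$, and for $k=0,1,\dots$ set $x_{k+1}=x_k-G_k^{-1}\nabla f(x_k)$, $u_k=x_{k+1}-x_k$, $G_{k+1}=\mathrm{SR1}(A,G_k,u_k)$. Then for all $k\ge1$, $$\lambda_f(x_k)\le\left(e^{\frac{n}{k}\ln\frac{L}{\mu}}-1\right)^{k/2}\sqrt{\frac{L}{\mu}}\cdot\lambda_f(x_0).$$
   Context: $\lambda_f(x)=\sqrt{\nabla f(x)^\top A^{-1}\nabla f(x)}$. For symmetric matrices $A,G$ and $u\neq0$, $\mathrm{SR1}(A,G,u)=G$ if $(G-A)u=0$, and otherwise $\mathrm{SR1}(A,G,u)=G-\frac{(G-A)uu^\top(G-A)}{u^\top(G-A)u}$. *)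

(* Defs.v *)
From HB Require Import structures.
From mathcomp Require Import all_boot all_order all_algebra.
From mathcomp Require Import all_classical all_reals all_analysis.
Set Implicit Arguments. Unset Strict Implicit. Unset Printing Implicit Defensive.
Import Order.TTheory GRing.Theory Num.Theory.
Local Open Scope ring_scope.

Section Defs.
Variables (R : realType) (n : nat).

Definition sc (M : 'M[R]_1) : R := M ord0 ord0.

Definition qform (M : 'M[R]_n) (v : 'cV[R]_n) : R := sc (v^T *m M *m v).

Definition loewner_le (M N : 'M[R]_n) : Prop :=
  forall v : 'cV[R]_n, qform M v <= qform N v.

Definition sym_mx (M : 'M[R]_n) : Prop := M^T = M.

(* gradient of f(x) = 1/2 x^T A x - b^T x  (A symmetric) *)
Definition grad_f (A : 'M[R]_n) (b : 'cV[R]_n) (x : 'cV[R]_n) : 'cV[R]_n :=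
  A *m x - b.

Definition lambda_f (A : 'M[R]_n) (b : 'cV[R]_n) (x : 'cV[R]_n) : R :=
  Num.sqrt (qform (invmx A) (grad_f A b x)).

Definition SR1 (A G : 'M[R]_n) (u : 'cV[R]_n) : 'M[R]_n :=
  if (G - A) *m u == 0 then G
  else G - ((sc (u^T *m (G - A) *m u))^-1 *: ((G - A) *m u *m u^T *m (G - A))).

Fixpoint sr1_iter (A : 'M[R]_n) (b : 'cV[R]_n) (L : R) (x0 : 'cV[R]_n) (k : nat)
  : 'cV[R]_n * 'M[R]_n :=
  match k with
  | 0%N => (x0, L%:M)
  | k'.+1 =>
      let (x, G) := sr1_iter A b L x0 k' in
      let x' := x - invmx G *m grad_f A b x in
      (x', SR1 A G (x' - x))
  end.

Definition sr1_x A b L x0 k := (sr1_iter A b L x0 k).1.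
End Defs.

(* Main.v *)
Require Import Defs.
From HB Require Import structures.
From mathcomp Require Import all_boot all_order all_algebra.
From mathcomp Require Import all_classical all_reals all_analysis.
From mathcomp Require Import ring lra zify.
Import Order.TTheory GRing.Theory Num.Theory.
Local Open Scope ring_scope.
Set Implicit Arguments. Unset Strict Implicit. Unset Printing Implicit Defensive.

Lemma scD (R : realType) (M N : 'M[R]_1) : sc (M + N) = sc M + sc N.
Proof. by rewrite /sc mxE. Qed.
Lemma scN (R : realType) (M : 'M[R]_1) : sc (- M) = - sc M.
Proof. by rewrite /sc mxE. Qed.
Lemma scB (R : realType) (M N : 'M[R]_1) : sc (M - N) = sc M - sc N.
Proof. by rewrite scD scN. Qed.
Lemma scZ (R : realType) (a : R) (M : 'M[R]_1) : sc (a *: M) = a * sc M.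
Proof. by rewrite /sc mxE. Qed.
Lemma sc_tr (R : realType) (M : 'M[R]_1) : sc (M^T) = sc M.
Proof. by rewrite /sc mxE. Qed.

Definition bf (R : realType) n (M : 'M[R]_n) (u v : 'cV[R]_n) := sc (u^T *m M *m v).

Lemma qformE (R : realType) n (M : 'M[R]_n) v : qform M v = bf M v v.
Proof. by []. Qed.

Lemma bf_sym (R : realType) n (M : 'M[R]_n) u v : M^T = M -> bf M u v = bf M v u.
Proof. by move=> hM; rewrite /bf -sc_tr !trmx_mul trmxK hM mulmxA. Qed.

Lemma bfDl (R : realType) n (M : 'M[R]_n) u w v : bf M (u + w) v = bf M u v + bf M w v.
Proof. by rewrite /bf raddfD /= !mulmxDl scD. Qed.
Lemma bfBl (R : realType) n (M : 'M[R]_n) u w v : bf M (u - w) v = bf M u v - bf M w v.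
Proof. by rewrite /bf raddfB /= !mulmxBl scB. Qed.
Lemma bfDr (R : realType) n (M : 'M[R]_n) u w v : bf M v (u + w) = bf M v u + bf M v w.
Proof. by rewrite /bf !mulmxDr scD. Qed.
Lemma bfBr (R : realType) n (M : 'M[R]_n) u w v : bf M v (u - w) = bf M v u - bf M v w.
Proof. by rewrite /bf !mulmxBr scB. Qed.
Lemma bfZr (R : realType) n (M : 'M[R]_n) a u v : bf M u (a *: v) = a * bf M u v.
Proof. by rewrite /bf -!scalemxAr scZ. Qed.
Lemma bfMD (R : realType) n (M N : 'M[R]_n) u v : bf (M + N) u v = bf M u v + bf N u v.
Proof. by rewrite /bf mulmxDr mulmxDl scD. Qed.
Lemma bfMB (R : realType) n (M N : 'M[R]_n) u v : bf (M - N) u v = bf M u v - bf N u v.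
Proof. by rewrite /bf mulmxBr mulmxBl scB. Qed.
Lemma bf_scalar (R : realType) n (a : R) u v : bf (a%:M : 'M[R]_n) u v = a * bf 1%:M u v.
Proof. by rewrite /bf mul_mx_scalar mulmx1 -scalemxAl scZ. Qed.
Lemma bf_mulr (R : realType) n (M : 'M[R]_n) u v : bf M u v = bf 1%:M u (M *m v).
Proof. by rewrite /bf mulmx1 mulmxA. Qed.
Lemma bf_mull (R : realType) n (M : 'M[R]_n) u v : bf M u v = bf 1%:M (M^T *m u) v.
Proof. by rewrite /bf mulmx1 trmx_mul trmxK. Qed.

Lemma nv_ge0 (R : realType) n (v : 'cV[R]_n) : 0 <= bf 1%:M v v.
Proof.
rewrite /bf mulmx1 /sc !mxE; apply: sumr_ge0 => i _; rewrite mxE.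
by rewrite -expr2 sqr_ge0.
Qed.
Lemma nv_eq0 (R : realType) n (v : 'cV[R]_n) : bf 1%:M v v = 0 -> v = 0.
Proof.
rewrite /bf mulmx1 /sc !mxE => /eqP; rewrite psumr_eq0; last first.
  by move=> i _; rewrite mxE -expr2 sqr_ge0.
move=> /allP H; apply/matrixP => i j; rewrite (ord1 j) mxE.
have := H i (mem_index_enum i); rewrite mxE mulf_eq0 orbb.
by move/eqP.
Qed.

Lemma rank_drop (R : realType) n (D : 'M[R]_n) (u : 'cV[R]_n) :
  D *m u != 0 -> sc (u^T *m D *m u) != 0 ->
  (\rank (D - (sc (u^T *m D *m u))^-1 *: (D *m u *m u^T *m D))%R < \rank D)%N.
Proof.
set c := sc _ => Du0 c0.
set D' := D - _.
have E : D' = (1%:M - c^-1 *: (D *m u *m u^T)) *m D.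
  by rewrite /D' mulmxBl mul1mx -scalemxAl.
have sub : (D' <= D)%MS by rewrite E submxMl.
have D'u : D' *m u = 0.
  rewrite /D' mulmxBl -scalemxAl -!mulmxA (mulmxA u^T) (mx11_scalar (u^T *m D *m u)).
  rewrite -/(sc _) -/c mul_mx_scalar.
  by rewrite -scalemxAr scalerA mulVf // scale1r subrr.
rewrite ltn_neqAle (mxrank_leqif_eq sub) (mxrank_leqif_eq sub) andbT.
apply/negP => /andP [_ /submxP [X hX]].
by move: Du0; rewrite hX -mulmxA D'u mulmx0 eqxx.
Qed.

Lemma bfZl (R : realType) n (M : 'M[R]_n) a u v : bf M (a *: u) v = a * bf M u v.
Proof. by rewrite /bf linearZ /= -!scalemxAl scZ. Qed.

Lemma psd_expand (R : realType) n (D : 'M[R]_n) u v t : D^T = D ->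
  bf D (v - t *: u) (v - t *: u) = bf D v v - 2 * t * bf D v u + t ^+ 2 * bf D u u.
Proof.
move=> hD; rewrite !bfBl !bfBr !bfZl !bfZr (bf_sym u v hD).
by rewrite -[2]/(1+1) !mulrDl !mul1r; rewrite expr2; lra.
Qed.

Lemma psd_cs (R : realType) n (D : 'M[R]_n) u v : D^T = D ->
  (forall w, 0 <= qform D w) ->
  (bf D u u)^-1 * (bf D v u) ^+ 2 <= bf D v v.
Proof.
move=> hD psd; set c := bf D u u; set s := bf D v u.
have c0 : 0 <= c by apply: psd.
have [->|cn0] := eqVneq c 0; first by rewrite invr0 mul0r; apply: psd.
have cp : 0 < c by rewrite lt0r cn0.
have := psd (v - (s / c) *: u); rewrite qformE psd_expand // -/c -/s.
have e1 : (s / c) ^+ 2 * c = c^-1 * s ^+ 2.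
  by field.
have e2 : 2 * (s / c) * s = 2 * (c^-1 * s ^+ 2).
  by field.
rewrite e1 e2; lra.
Qed.

Lemma psd_zero (R : realType) n (D : 'M[R]_n) u : D^T = D ->
  (forall w, 0 <= qform D w) -> qform D u = 0 -> D *m u = 0.
Proof.
move=> hD psd q0; set w := D *m u.
have nw0 := nv_ge0 w; have dw0 : 0 <= bf D w w by apply: psd.
set nw := bf 1%:M w w in nw0 *; set dw := bf D w w in dw0 *.
have e : bf D u w = nw by rewrite /nw bf_mull hD.
have := psd (u - (nw / (dw + 1)) *: w); rewrite qformE psd_expand //.
rewrite e -/dw -qformE q0.
set t := nw / (dw + 1).
have ht : t * (dw + 1) = nw by rewrite /t mulfVK // gt_eqF // ltr_pwDr.
move=> h.
have t0 : 0 <= t by rewrite /t divr_ge0 // addr_ge0.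
have h3 : 0 <= (dw + 1) * (0 - 2 * t * nw + t ^+ 2 * dw) by rewrite mulr_ge0 // addr_ge0.
have e3 : (dw + 1) * (0 - 2 * t * nw + t ^+ 2 * dw) = - nw * nw - t * nw.
  by rewrite -ht; ring.
have : nw * nw <= 0 by nra.
move=> h2; apply: nv_eq0; rewrite -/w -/nw; nra.
Qed.

Lemma pd_unit (R : realType) n (M : 'M[R]_n) c : 0 < c ->
  (forall v, c * bf 1%:M v v <= qform M v) -> M \in unitmx.
Proof.
move=> c0 H; rewrite unitmxE unitfE; apply/negP => /det0P [v v0 vM].
have h := H v^T.
have q0 : qform M v^T = 0 by rewrite /qform trmxK vM !mul0mx /sc mxE.
rewrite q0 in h.
have : bf 1%:M v^T v^T = 0.
  apply/eqP; rewrite eq_le nv_ge0 andbT.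
  by rewrite -(pmulr_rle0 _ c0).
move/nv_eq0 => /(congr1 trmx); rewrite trmxK => h0.
by move: v0; rewrite h0 linear0 eqxx.
Qed.

Lemma qform_inv (R : realType) n (A : 'M[R]_n) e : A^T = A -> A \in unitmx ->
  qform (invmx A) (A *m e) = qform A e.
Proof.
move=> hA uA; rewrite /qform trmx_mul hA -!mulmxA (mulmxA (invmx A)) mulVmx //.
by rewrite mul1mx.
Qed.

Lemma contract (R : realType) n (A G : 'M[R]_n) z e : A^T = A -> G^T = G ->
  (forall w, 0 <= qform (G - A) w) -> G *m z = (G - A) *m e ->
  qform A z <= qform (G - A) e / 2.
Proof.
move=> hA hG psd hz.
have DT : (G - A)^T = G - A by rewrite linearB /= hA hG.
have h1 : bf G z z = bf (G - A) z e by rewrite bf_mulr hz -bf_mulr.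
have h2 : bf (G - A) z z = bf G z z - bf A z z by rewrite bfMB.
have h3 := psd (z - 1 *: e); rewrite qformE psd_expand // mulr1 expr1n mul1r in h3.
have h4 := psd z; rewrite !qformE in h4 *.
lra.
Qed.

Lemma sc_mul11 (R : realType) (P Q : 'M[R]_1) : sc (P *m Q) = sc P * sc Q.
Proof. by rewrite /sc mxE big_ord1. Qed.

Lemma qform_ww (R : realType) n (D : 'M[R]_n) u v : D^T = D ->
  qform (D *m u *m u^T *m D) v = (bf D v u) ^+ 2.
Proof.
move=> hD.
have -> : D *m u *m u^T *m D = (D *m u) *m (D *m u)^T.
  by rewrite trmx_mul hD mulmxA.
have -> : bf D v u = sc (v^T *m (D *m u)) by rewrite /bf mulmxA.
set w := D *m u.
rewrite /qform mulmxA -(mulmxA _ w^T) sc_mul11.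
have -> : w^T *m v = (v^T *m w)^T.
  by rewrite /w !trmx_mul trmxK.
by rewrite {2}/sc mxE expr2.
Qed.

Lemma qformZ (R : realType) n (W : 'M[R]_n) a v : qform (a *: W) v = a * qform W v.
Proof. by rewrite /qform -scalemxAr -scalemxAl scZ. Qed.
Lemma qformB (R : realType) n (M N : 'M[R]_n) v : qform (M - N) v = qform M v - qform N v.
Proof. exact: bfMB. Qed.

Lemma sr1_inv (R : realType) n (A G : 'M[R]_n) u L : A^T = A -> G^T = G ->
  (forall v, qform A v <= qform G v) -> (forall v, qform G v <= L * bf 1%:M v v) ->
  let G' := SR1 A G u in
  [/\ G'^T = G', (forall v, qform A v <= qform G' v) & (forall v, qform G' v <= L * bf 1%:M v v)].
Proof.
move=> hA hG lo up /=; rewrite /SR1; case: ifP => _; first by split.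
have DT : (G - A)^T = G - A by rewrite linearB /= hA hG.
have psd : forall w, 0 <= qform (G - A) w.
  by move=> w; rewrite qformE bfMB subr_ge0; apply: lo.
have wwT : (((G - A) *m u *m u^T *m (G - A)))^T = (G - A) *m u *m u^T *m (G - A).
  by rewrite !trmx_mul trmxK DT !mulmxA.
have qG' : forall v, qform (G - (sc (u^T *m (G - A) *m u))^-1 *:
    ((G - A) *m u *m u^T *m (G - A))) v =
    qform G v - (bf (G - A) u u)^-1 * (bf (G - A) v u) ^+ 2.
  by move=> v; rewrite qformB qformZ qform_ww.
split.
- by rewrite linearB /= linearZ /= wwT hG.
- move=> v; rewrite qG'.
  have := psd_cs u v DT psd; rewrite -!qformE !qformB; lra.
- move=> v; rewrite qG'.
  have : 0 <= (bf (G - A) u u)^-1 * (bf (G - A) v u) ^+ 2.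
    by rewrite mulr_ge0 ?sqr_ge0 // invr_ge0; apply: psd.
  move: (up v); lra.
Qed.

Lemma main_inv (R : realType) n (A : 'M[R]_n) b mu L x0 :
  A^T = A -> 0 < mu -> mu <= L ->
  (forall v, mu * bf 1%:M v v <= qform A v) ->
  (forall v, qform A v <= L * bf 1%:M v v) ->
  forall k,
  let p := sr1_iter A b L x0 k in
  [/\ p.2^T = p.2, (forall v, qform A v <= qform p.2 v),
      (forall v, qform p.2 v <= L * bf 1%:M v v),
      qform (invmx A) (grad_f A b p.1) <= (L / mu - 1) ^+ k * qform (invmx A) (grad_f A b x0)
    & ((grad_f A b p.1 = 0 \/ (\rank (p.2 - A)%R + k <= n)%N) /\
       ((n < k)%N -> grad_f A b p.1 = 0))].
Proof.
move=> hA mu0 muL hmu hL.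
have uA : A \in unitmx by apply: (pd_unit mu0).
have Lmu : 1 <= L / mu.
  by rewrite ler_pdivlMr // mul1r.
elim=> [|k IH] /=.
  split.
  - exact: tr_scalar_mx.
  - by move=> v; rewrite (qformE L%:M) bf_scalar.
  - by move=> v; rewrite (qformE L%:M) bf_scalar.
  - by rewrite expr0 mul1r.
  - by split => //; right; rewrite addn0 rank_leq_col.
move: IH; case: (sr1_iter A b L x0 k) => x G /= [hG lo up IHq [IHr _]].
set g := grad_f A b x.
set x' := x - invmx G *m g.
have uG : G \in unitmx.
  by apply: (pd_unit mu0) => v; apply: le_trans (hmu v) (lo v).
have hu : x' - x = - (invmx G *m g) by rewrite /x' addrAC subrr add0r.
have hg' : grad_f A b x' = g - A *m (invmx G *m g).
  by rewrite /grad_f /x' mulmxBr addrAC.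
have hg'2 : grad_f A b x' = - ((G - A) *m (x' - x)).
  by rewrite hg' hu mulmxN opprK mulmxBl mulKVmx.
have [GT lo' up'] := sr1_inv (x' - x) hA hG lo up.
split => //.
-
  set e := invmx A *m g.
  set z := invmx A *m grad_f A b x'.
  have Ae : A *m e = g by rewrite /e mulKVmx.
  have Az : A *m z = grad_f A b x' by rewrite /z mulKVmx.
  have Gz : G *m z = (G - A) *m e.
    have -> : z = e - invmx G *m g by rewrite /z hg' mulmxBr mulKmx.
    by rewrite mulmxBr mulKVmx // mulmxBl Ae.
  have psd : forall w, 0 <= qform (G - A) w.
    by move=> w; rewrite qformB subr_ge0.
  have c1 := contract hA hG psd Gz.
  have c2 : qform (G - A) e <= (L / mu - 1) * qform A e.
    rewrite qformB.
    have h1 := up e; have h2 := hmu e.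
    have h3 : L * bf 1%:M e e = (L / mu) * (mu * bf 1%:M e e).
      by rewrite mulrA divfK // gt_eqF.
    have h4 : (L / mu) * (mu * bf 1%:M e e) <= (L / mu) * qform A e.
      by rewrite ler_wpM2l // (le_trans ler01 Lmu).
    lra.
  have qe0 : 0 <= qform A e.
    have := hmu e; have := nv_ge0 e; nra.
  rewrite -Az qform_inv //.
  rewrite -/g -Ae qform_inv // in IHq.
  rewrite exprS -mulrA.
  apply: le_trans (_ : (L / mu - 1) * qform A e <= _).
    have : 0 <= L / mu - 1 by rewrite subr_ge0.
    move=> h0; have := mulr_ge0 h0 qe0; lra.
  by rewrite ler_wpM2l // subr_ge0.
-
  split; last first.
    move=> nk; case: IHr => [g0|rk].
      by rewrite hg' /g g0 !mulmx0 subrr.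
    have : \rank (G - A)%R = 0%N by lia.
    move/eqP; rewrite mxrank_eq0 => /eqP D0.
    by rewrite hg'2 D0 mul0mx oppr0.
  case: IHr => [g0|rk].
    by left; rewrite hg' /g g0 !mulmx0 subrr.
  have [Du0|Du0] := eqVneq ((G - A) *m (x' - x)) 0.
    by left; rewrite hg'2 Du0 oppr0.
  right.
  have DT : (G - A)^T = G - A by rewrite linearB /= hA hG.
  have psd : forall w, 0 <= qform (G - A) w.
    by move=> w; rewrite qformB subr_ge0.
  have c0 : sc ((x' - x)^T *m (G - A) *m (x' - x)) != 0.
    apply/negP => /eqP c0; move/eqP: Du0; apply; exact: psd_zero.
  rewrite /SR1 (negbTE Du0) addrAC.
  have := rank_drop Du0 c0.
  move: rk => rk h; rewrite addnS; apply: (leq_trans _ rk); rewrite ltn_add2r; exact: h.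
Qed.

Unset Implicit Arguments.

Theorem theorem2 (R : realType) (n : nat) (A : 'M[R]_n) (b : 'cV[R]_n)
  (mu L : R) (x0 : 'cV[R]_n) :
  sym_mx A -> 0 < mu -> mu <= L ->
  loewner_le (mu%:M) A -> loewner_le A (L%:M) ->
  forall k : nat, (1 <= k)%N ->
    lambda_f A b (sr1_x A b L x0 k) <=
      (expR ((n%:R / k%:R) * ln (L / mu)) - 1) `^ (k%:R / 2)
      * Num.sqrt (L / mu) * lambda_f A b x0.
Proof.
move=> hA mu0 muL hmu hL k k1.
have hmu' : forall v, mu * bf 1%:M v v <= qform A v.
  by move=> v; rewrite -bf_scalar; exact: hmu v.
have hL' : forall v, qform A v <= L * bf 1%:M v v.
  by move=> v; rewrite -bf_scalar; exact: hL v.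
have K1 : 1 <= L / mu by rewrite ler_pdivlMr // mul1r.
have K0 : 0 < L / mu by apply: lt_le_trans K1.
set K := L / mu in K1 K0 *.
have rhs0 : 0 <= (expR ((n%:R / k%:R) * ln K) - 1) `^ (k%:R / 2).
  exact: powR_ge0.
have [knn | nk] := leqP k n; last first.
  have [_ _ _ _ [_ hz]] := main_inv b x0 hA mu0 muL hmu' hL' k.
  rewrite /lambda_f /sr1_x (hz nk) /qform mulmx0 /sc mxE sqrtr0.
  by rewrite mulr_ge0 // mulr_ge0 // sqrtr_ge0.
have [_ _ _ hq _] := main_inv b x0 hA mu0 muL hmu' hL' k.
rewrite /lambda_f /sr1_x.
set q := qform _ (grad_f A b (sr1_iter A b L x0 k).1) in hq *.
set q0 := qform _ (grad_f A b x0) in hq *.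
have Km1 : 0 <= K - 1 by rewrite subr_ge0.
have s1 : Num.sqrt q <= (K - 1) `^ (k%:R / 2) * Num.sqrt q0.
  apply: le_trans (ler_wsqrtr hq) _.
  rewrite sqrtrM ?exprn_ge0 //.
  rewrite powRrM powR_mulrn // powR12_sqrt ?exprn_ge0 //.
have kn : 1 <= n%:R / k%:R :> R.
  by rewrite ler_pdivlMr ?ltr0n // mul1r ler_nat.
have s2 : (K - 1) `^ (k%:R / 2) <= (expR ((n%:R / k%:R) * ln K) - 1) `^ (k%:R / 2).
  apply: ge0_ler_powR => //.
  by rewrite nnegrE subr_ge0 -expR0 ler_expR mulr_ge0 ?ln_ge0 // (le_trans ler01 kn).
  rewrite lerD2r -{1}(lnK K0) ler_expR.
  by rewrite ler_peMl // ln_ge0.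
have s3 : 1 <= Num.sqrt K by rewrite -sqrtr1 ler_wsqrtr.
have sq0 : 0 <= Num.sqrt q0 by apply: sqrtr_ge0.
set P := (expR _ - 1) `^ _ in s2 rhs0 *.
set Q := (K - 1) `^ _ in s1 s2 *.
apply: le_trans s1 _.
have h1 : Q * Num.sqrt q0 <= P * Num.sqrt q0 by rewrite ler_wpM2r.
have h2 : P <= P * Num.sqrt K by rewrite ler_peMr.
have h3 : P * Num.sqrt q0 <= P * Num.sqrt K * Num.sqrt q0 by rewrite -subr_ge0 -mulrBl mulr_ge0 // subr_ge0.
lra.
Qed.
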